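(* Let $0<\mathcal{R}_0\le1$ and let $F$ be a convex, nonnegative, differentiable function on $\{x'\in\mathbb{R}^{n-1}:|x'|\le\mathcal{R}_0\}$ with $F(0)=0$. For $r\in(0,\mathcal{R}_0)$ define $$\delta(r)=\max_{|x'|\le r}\frac{F(x')}{|x'|},\qquad \delta_1(r)=\max_{|x'|\le r}|\nabla F(x')|.$$ Then: (a) $\delta_1(r)\to0$ as $r\to0$ if and only if $\delta(r)\to0$ as $r\to0$; (b) $\delta_1$ satisfies the Dini condition at zero if and only if $\delta$ satisfies the Dini condition at zero.
   Context: Class $\mathcal{D}_1$: a function $\sigma:[0,1]\to\mathbb{R}_+$ belongs to $\mathcal{D}_1$ if - $\sigma$ is increasing, $\sigma(0)=0$ and $\sigma(1)=1$; - $\sigma(t)/t$ is summable on $(0,1)$ and decreasing. A function $\zeta$ satisfies the Dini condition at zero if $|\zeta(r)|\le C\sigma(r)$ (for small $r>0$) for some constant $C$ and some $\sigma\in\mathcal{D}_1$. *)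

(* Defs.v *)
From HB Require Import structures.
From mathcomp Require Import all_boot all_order all_algebra.
From mathcomp Require Import all_classical all_reals all_analysis.
Set Implicit Arguments. Unset Strict Implicit. Unset Printing Implicit Defensive.
Import Order.TTheory GRing.Theory Num.Theory.
Import numFieldNormedType.Exports.
Local Open Scope classical_set_scope.
Local Open Scope ring_scope.

Definition enorm {R : realType} {m : nat} (v : 'rV[R]_m) : R :=
  Num.sqrt (\sum_(i < m) (v ord0 i) ^+ 2).

Definition grad {R : realType} {m : nat} (F : 'rV[R]_m -> R) (x : 'rV[R]_m)
  : 'rV[R]_m := \row_(i < m) ('D_(delta_mx ord0 i) F x).

Definition cball0 {R : realType} {m : nat} (r : R) : set 'rV[R]_m :=
  [set x | enorm x <= r].

(* delta(r) = max_{|x'| <= r} F(x') / |x'|  (taken as the supremum; the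
   value at x' = 0 is 0/0 = 0 in MathComp, harmless since F >= 0). *)
Definition delta_fun {R : realType} {m : nat} (F : 'rV[R]_m -> R) (r : R) : R :=
  sup [set F x / enorm x | x in cball0 r].

Definition delta1_fun {R : realType} {m : nat} (F : 'rV[R]_m -> R) (r : R) : R :=
  sup [set enorm (grad F x) | x in cball0 r].

Definition classD1 {R : realType} (sigma : R -> R) : Prop :=
  [/\ (forall s t, 0 <= s -> s <= t -> t <= 1 -> sigma s <= sigma t),
      (forall t, 0 <= t -> t <= 1 -> 0 <= sigma t),
      sigma 0 = 0 /\ sigma 1 = 1,
      (lebesgue_measure).-integrable `]0, 1[ (fun t => (sigma t / t)%:E) &
      (forall s t, 0 < s -> s <= t -> t < 1 -> sigma t / t <= sigma s / s)].

Definition dini_at0 {R : realType} (zeta : R -> R) : Prop :=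
  exists C : R, exists2 sigma : R -> R, classD1 sigma &
    \forall r \near 0^'+, `|zeta r| <= C * sigma r.

Definition convex_on {R : realType} {m : nat} (A : set 'rV[R]_m)
  (F : 'rV[R]_m -> R) : Prop :=
  forall x y (t : R), A x -> A y -> 0 <= t <= 1 ->
    F (t *: x + (1 - t) *: y) <= t * F x + (1 - t) * F y.

(* Main.v *)
Require Import Defs.
From HB Require Import structures.
From mathcomp Require Import all_boot all_order all_algebra.
From mathcomp Require Import all_classical all_reals all_analysis.
From mathcomp Require Import ring lra.
Import Order.TTheory GRing.Theory Num.Theory.
Import numFieldNormedType.Exports.
Local Open Scope classical_set_scope.
Local Open Scope ring_scope.
Section Aux.
Context {R : realType} {m : nat}.
Implicit Types x y : 'rV[R]_m.

Definition dot x y : R := \sum_(i < m) x ord0 i * y ord0 i.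

Lemma enorm_ge0 x : 0 <= enorm x.
Proof. exact: sqrtr_ge0. Qed.

Lemma sumsq_ge0 x : 0 <= \sum_(i < m) x ord0 i ^+ 2.
Proof. by apply: sumr_ge0 => i _; exact: sqr_ge0. Qed.

Lemma dotxx x : dot x x = enorm x ^+ 2.
Proof. by rewrite /enorm sqr_sqrtr ?sumsq_ge0 // /dot; apply: eq_bigr => i _; rewrite expr2. Qed.

Lemma enorm0 : enorm (0 : 'rV[R]_m) = 0.
Proof. by rewrite /enorm big1 ?sqrtr0 // => i _; rewrite mxE expr0n. Qed.

Lemma enorm_eq0 x : enorm x = 0 -> x = 0.
Proof.
move=> /eqP; rewrite /enorm sqrtr_eq0 => h.
have h0 : \sum_(i < m) x ord0 i ^+ 2 = 0.
  by apply/eqP; rewrite eq_le h sumsq_ge0.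
have := psumr_eq0P (fun i _ => sqr_ge0 (x ord0 i)) h0.
move=> H; apply/rowP => j; rewrite mxE.
by apply/eqP; rewrite -sqrf_eq0; apply/eqP; exact: H.
Qed.

Lemma enormZ (c : R) x : enorm (c *: x) = `|c| * enorm x.
Proof.
rewrite /enorm -sqrtr_sqr -sqrtrM ?sqr_ge0 // mulr_sumr.
by congr Num.sqrt; apply: eq_bigr => i _; rewrite mxE exprMn.
Qed.

Lemma quad_id (a b : R) x y :
  \sum_(i < m) (a * x ord0 i - b * y ord0 i) ^+ 2 =
  a ^+ 2 * enorm x ^+ 2 - 2 * a * b * dot x y + b ^+ 2 * enorm y ^+ 2.
Proof.
rewrite -!dotxx /dot !mulr_sumr -sumrB -big_split /=.
by apply: eq_bigr => i _; ring.
Qed.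

Lemma cauchy_schwarz x y : dot x y <= enorm x * enorm y.
Proof.
set A := enorm x; set B := enorm y; set C := dot x y.
have A0 : 0 <= A := enorm_ge0 x. have B0 : 0 <= B := enorm_ge0 y.
have Q a b : 0 <= a ^+ 2 * A ^+ 2 - 2 * a * b * C + b ^+ 2 * B ^+ 2.
  by rewrite -quad_id; apply: sumr_ge0 => i _; exact: sqr_ge0.
have [C0|C0] := leP C 0; first by apply: le_trans C0 _; exact: mulr_ge0.
have [B00|B0'] := eqVneq B 0.
  have := Q 1 ((A ^+ 2 + 1) / (2 * C)).
  rewrite B00 expr0n /= mulr0 addr0 mulr1 expr1n mul1r.
  have -> : 2 * ((A ^+ 2 + 1) / (2 * C)) * C = A ^+ 2 + 1.
    by field; rewrite gt_eqF.
  lra.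
have Bp : 0 < B by rewrite lt_def B0' B0.
have := Q (B ^+ 2) C => H.
have : 0 <= B ^+ 2 * ((A * B) ^+ 2 - C ^+ 2).
  by apply: le_trans H _; rewrite le_eqVlt; apply/orP; left; apply/eqP; ring.
rewrite pmulr_rge0 ?exprn_gt0 // subr_ge0 => H2.
have AB : 0 <= A * B by exact: mulr_ge0.
nra.
Qed.

Lemma enormD x y : enorm (x + y) <= enorm x + enorm y.
Proof.
rewrite -(ler_pXn2r (_ : (0 < 2)%N)) ?nnegrE ?addr_ge0 ?enorm_ge0 //.
rewrite -dotxx.
have -> : dot (x + y) (x + y) = dot x x + 2 * dot x y + dot y y.
  rewrite /dot mulr_sumr -!big_split /=.
  by apply: eq_bigr => i _; rewrite !mxE; ring.
rewrite !dotxx.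
have := cauchy_schwarz x y => H.
rewrite sqrrD; lra.
Qed.

Lemma mxnorm_le x : `|x| <= enorm x.
Proof.
rewrite [`|x|]mx_normrE; apply: bigmax_le => [|[i j] _]; first exact: enorm_ge0.
rewrite /= (ord1 i) /enorm -sqrtr_sqr; rewrite ler_sqrt ?sqr_ge0 //.
rewrite (bigD1 j) //= lerDl; apply: sumr_ge0 => k _; exact: sqr_ge0.
exact: sumsq_ge0.
Qed.

Lemma dotZr (c : R) x y : dot x (c *: y) = c * dot x y.
Proof. by rewrite /dot mulr_sumr; apply: eq_bigr => i _; rewrite mxE; ring. Qed.

End Aux.
Section Deriv.
Context {R : realType} {m : nat}.
Implicit Types x y v : 'rV[R]_m.

Lemma grad_dot (F : 'rV[R]_m -> R) x v : differentiable F x ->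
  'D_v F x = dot (grad F x) v.
Proof.
move=> dF; rewrite deriveE // {1}(row_sum_delta v) linear_sum /dot.
apply: eq_bigr => i _; rewrite linearZ /= -deriveE // mxE mulrC.
by [].
Qed.

Lemma convex_deriv (R0 : R) (F : 'rV[R]_m -> R) x y :
  convex_on (cball0 R0) F -> differentiable F x ->
  enorm x <= R0 -> enorm y <= R0 -> 'D_(y - x) F x <= F y - F x.
Proof.
move=> cvx dF xR yR.
have cv : cvg ((fun h : R => h^-1 *: ((F \o shift x) (h *: (y - x)) - F x)) @ 0^').
  exact: diff_derivable.
rewrite /derive cvg_at_rightE; last exact: cv.
apply: limr_le.
  by apply/cvg_ex; eexists; apply: cvg_dnbhs_at_right; exact: cv.
near=> h.
have h0 : 0 < h by near: h; exact: nbhs_right_gt.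
have h1 : h < 1 by near: h; exact: nbhs_right_lt.
rewrite /=.
have -> : h *: (y - x) + x = h *: y + (1 - h) *: x.
  by rewrite scalerBr scalerBl scale1r -addrA [- _ + x]addrC.
have := cvx y x h yR xR; rewrite (ltW h0) (ltW h1) => /(_ isT) hc.
change (h^-1 * (F (h *: y + (1 - h) *: x) - F x) <= F y - F x).
rewrite mulrC ler_pdivrMr //; nra.
Unshelve. all: by end_near.
Qed.
End Deriv.
Section Near.
Context {R : realType}.
Lemma nearR_intro (Q : R -> Prop) e : 0 < e ->
  (forall r, 0 < r -> r < e -> Q r) -> \forall r \near 0^'+, Q r.
Proof.
move=> e0 H; near=> r; apply: H.
  by near: r; exact: nbhs_right_gt.
by near: r; exact: nbhs_right_lt.
Unshelve. all: by end_near.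
Qed.

Lemma nearR_elim (Q : R -> Prop) : (\forall r \near 0^'+, Q r) ->
  exists2 e, 0 < e & forall r, 0 < r -> r < e -> Q r.
Proof.
rewrite near_withinE => /nbhs_ballP [e e0 H]; exists e => // r r0 re.
apply: H => //; rewrite /ball /= sub0r normrN gtr0_norm //.
Qed.

Lemma cvgR0P (f : R -> R) : (f r @[r --> 0^'+] --> 0) <->
  forall eps, 0 < eps -> exists2 e, 0 < e & forall r, 0 < r -> r < e -> `|f r| < eps.
Proof.
split.
  move=> /cvgrPdist_lt H eps eps0; apply: nearR_elim.
  by apply: filterS (H eps eps0) => r; rewrite sub0r normrN.
move=> H; apply/cvgrPdist_lt => eps eps0; have [e e0 He] := H eps eps0.
near=> r; rewrite sub0r normrN; apply: He.
  by near: r; exact: nbhs_right_gt.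
by near: r; exact: nbhs_right_lt.
Unshelve. all: by end_near.
Qed.
End Near.
Section Key.
Context {R : realType} {m : nat}.

Lemma key (R0 : R) (F : 'rV[R]_m -> R) : 0 < R0 ->
  convex_on (cball0 R0) F -> (forall x, enorm x <= R0 -> 0 <= F x) ->
  (forall x, enorm x <= R0 -> differentiable F x) -> F 0 = 0 ->
  exists2 eps0, 0 < eps0 & forall r, 0 < r -> 2 * r <= eps0 ->
   [/\ 0 <= delta_fun F r, delta_fun F r <= delta1_fun F r &
       delta1_fun F r <= 2 * delta_fun F (2 * r)].
Proof.
move=> R00 cvx Fge0 dF F00.
have E00 : enorm (0 : 'rV[R]_m) <= R0 by rewrite enorm0 ltW.
have [e e0 He] : exists2 e, 0 < e & forall y : 'rV[R]_m, `|y| < e -> F y < 1.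
  have := differentiable_continuous (dF 0 E00).
  move=> /cvgrPdist_lt /(_ 1 ltr01) /nbhs_normP [e e0 He].
  exists e => // y ye; have := He y; rewrite /= sub0r normrN F00 sub0r.
  move=> /(_ ye) H; apply: le_lt_trans H; rewrite normrN; exact: ler_norm.
set eps0 := Num.min (e / 2) R0.
have eps0p : 0 < eps0 by rewrite lt_min divr_gt0 // R00.
have eps0R : eps0 <= R0 by rewrite ge_min lexx orbT.
have Fle1 y : enorm y <= eps0 -> F y <= 1.
  move=> hy; apply: ltW; apply: He; apply: le_lt_trans (mxnorm_le y) _.
  apply: le_lt_trans hy _; rewrite gt_min; apply/orP; left.
  by rewrite ltr_pdivrMr // ltr_pMr // ltr1n.
have B1 x : enorm x <= eps0 -> F x / enorm x <= eps0^-1.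
  move=> hx; have [Ex0|Ex0] := eqVneq (enorm x) 0.
    by rewrite Ex0 invr0 mulr0 invr_ge0 ltW.
  have Exp : 0 < enorm x by rewrite lt_def Ex0 enorm_ge0.
  set t := enorm x / eps0; set z := (eps0 / enorm x) *: x.
  have Ez : enorm z = eps0.
    by rewrite enormZ ger0_norm ?divr_ge0 ?enorm_ge0 ?ltW // divfK.
  have xz : x = t *: z + (1 - t) *: 0.
    by rewrite scaler0 addr0 /t /z scalerA mulrA divfK ?gt_eqF // mulfV ?scale1r ?gt_eqF.
  have t01 : 0 <= t <= 1.
    apply/andP; split; first exact: divr_ge0 (enorm_ge0 x) (ltW eps0p).
    by rewrite /t ler_pdivrMr // mul1r.

  have := cvx z 0 t; rewrite /cball0 /= Ez eps0R E00 t01 F00 mulr0 addr0 -xz.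
  move=> /(_ isT isT isT) Fx.
  rewrite ler_pdivrMr // mulrC; apply: le_trans Fx _.
  rewrite -/t -[X in _ <= X]mulr1; apply: ler_wpM2l; first by case/andP: t01.
  by rewrite Fle1 // Ez.
have Sub r : 0 <= r -> r <= eps0 -> [/\ has_ubound [set F x / enorm x | x in cball0 r],
    0 <= delta_fun F r & forall x, enorm x <= r -> F x / enorm x <= delta_fun F r].
  move=> r0 reps.
  have ub : has_ubound [set F x / enorm x | x in cball0 r].
    by exists eps0^-1 => _ [x hx <-]; apply: B1; exact: le_trans hx reps.
  have inS x : enorm x <= r -> F x / enorm x <= delta_fun F r.
    by move=> hx; apply: (ub_le_sup ub); exists x.
  split => //; have := inS 0; rewrite enorm0 invr0 mulr0; apply; exact: r0.
have Fle r y : 0 <= r -> r <= eps0 -> enorm y <= r -> F y <= delta_fun F r * enorm y.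
  move=> r0 reps hy; have [_ d0 inS] := Sub r r0 reps.
  have [Ey0|Ey0] := eqVneq (enorm y) 0.
    by rewrite Ey0 mulr0 (enorm_eq0 _ Ey0) F00.
  have Eyp : 0 < enorm y by rewrite lt_def Ey0 enorm_ge0.
  by rewrite -ler_pdivrMr //; exact: inS.
have GB r x : 0 < r -> 2 * r <= eps0 -> enorm x <= r ->
    enorm (grad F x) <= 2 * delta_fun F (2 * r).
  move=> r0 reps hx.
  have r2 : 0 <= 2 * r by rewrite mulr_ge0 // ltW.
  have [_ d0 _] := Sub (2 * r) r2 reps.
  set g := grad F x.
  have [Eg0|Eg0] := eqVneq (enorm g) 0; first by rewrite Eg0 mulr_ge0.
  have Egp : 0 < enorm g by rewrite lt_def Eg0 enorm_ge0.
  set v := (r / enorm g) *: g; set y := x + v.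
  have Ev : enorm v = r by rewrite enormZ ger0_norm ?divr_ge0 ?enorm_ge0 ?ltW // divfK.
  have Ey : enorm y <= 2 * r.
    by apply: le_trans (enormD _ _) _; rewrite Ev; lra.
  have xR : enorm x <= R0 by apply: le_trans eps0R; lra.
  have yR : enorm y <= R0 by apply: le_trans eps0R; lra.
  have := convex_deriv _ _ _ _ cvx (dF x xR) xR yR.
  have -> : y - x = v by rewrite /y addrC addKr.
  rewrite grad_dot; last exact: dF x xR.
  rewrite -/g.
  have -> : dot g v = r / enorm g * dot g g by exact: dotZr.
  rewrite dotxx.
  have Fy := Fle (2 * r) y r2 reps Ey.
  have Fx := Fge0 x xR.
  have -> : r / enorm g * enorm g ^+ 2 = r * enorm g.
    by rewrite expr2 mulrA divfK ?gt_eqF.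
  move=> H.
  have H2 : r * enorm g <= r * (2 * delta_fun F (2 * r)).
    apply: le_trans H _; apply: le_trans (_ : F y <= _); first lra.
    apply: le_trans Fy _; nra.
  by rewrite -(ler_pM2l r0).
exists eps0 => // r r0 reps.
have rle : r <= eps0 by lra.
have [_ d0 _] := Sub r (ltW r0) rle.
have E0r : enorm (0 : 'rV[R]_m) <= r by rewrite enorm0 ltW.
have ubG : has_ubound [set enorm (grad F x) | x in cball0 r].
  by exists (2 * delta_fun F (2 * r)) => _ [x hx <-]; exact: GB.
have d1le : delta1_fun F r <= 2 * delta_fun F (2 * r).
  apply: ge_sup; first by exists (enorm (grad F 0)); exists 0.
  by move=> _ [x hx <-]; exact: GB.
split => //.
apply: ge_sup; first by exists (F 0 / enorm (0 : 'rV[R]_m)); exists 0.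
move=> _ [x hx <-].
have gle : enorm (grad F x) <= delta1_fun F r by apply: (ub_le_sup ubG); exists x.
apply: le_trans gle.
have xR : enorm x <= R0 by apply: le_trans eps0R; rewrite /cball0 /= in hx; lra.
have [Ex0|Ex0] := eqVneq (enorm x) 0.
  by rewrite Ex0 invr0 mulr0 enorm_ge0.
have Exp : 0 < enorm x by rewrite lt_def Ex0 enorm_ge0.
rewrite ler_pdivrMr //.
have := convex_deriv _ _ _ _ cvx (dF x xR) xR E00.
rewrite grad_dot; last exact: dF x xR.
rewrite F00 sub0r -scaleN1r dotZr => H.
have := cauchy_schwarz (grad F x) x; lra.
Qed.
End Key.

Theorem lemma2p1 (R : realType) (n : nat) (R0 : R)
  (F : 'rV[R]_(n.-1) -> R) :
  (1 < n)%N ->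
  0 < R0 -> R0 <= 1 ->
  convex_on (cball0 R0) F ->
  (forall x, enorm x <= R0 -> 0 <= F x) ->
  (forall x, enorm x <= R0 -> differentiable F x) ->
  F 0 = 0 ->
  ((delta1_fun F r @[r --> 0^'+] --> 0) <-> (delta_fun F r @[r --> 0^'+] --> 0))
  /\ (dini_at0 (delta1_fun F) <-> dini_at0 (delta_fun F)).
Proof.
move=> _ R00 _ cvx Fge0 dF F00.
have [eps0 eps0p P] := key R0 F R00 cvx Fge0 dF F00.
have e2 : 0 < eps0 / 2 by rewrite divr_gt0.
split; split.
- move=> /cvgR0P H; apply/cvgR0P => eps eps0'.
  have [e1 e1p He1] := H eps eps0'.
  exists (Num.min e1 (eps0 / 2)); first by rewrite lt_min e1p e2.
  move=> r r0; rewrite lt_min => /andP [re1 re2].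
  have [d0 dd1 _] := P r r0 (ltac:(lra)).
  have := He1 r r0 re1; rewrite !ger0_norm //; [lra | lra].
- move=> /cvgR0P H; apply/cvgR0P => eps eps0'.
  have [e1 e1p He1] := H (eps / 2) (ltac:(lra)).
  exists (Num.min (e1 / 2) (eps0 / 4)); first by rewrite lt_min !divr_gt0.
  move=> r r0; rewrite lt_min => /andP [re1 re2].
  have [d0 dd1 d1d] := P r r0 (ltac:(lra)).
  have [d0' _ _] := P (2 * r) (ltac:(lra)) (ltac:(lra)).
  have := He1 (2 * r) (ltac:(lra)) (ltac:(lra)).
  rewrite !ger0_norm //; [lra | lra].
- move=> [C [sigma hs hn]]; exists C; exists sigma => //.
  have [e1 e1p He1] := nearR_elim _ hn.
  apply: (nearR_intro _ (Num.min e1 (eps0 / 2))); first by rewrite lt_min e1p e2.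
  move=> r r0; rewrite lt_min => /andP [re1 re2].
  have [d0 dd1 _] := P r r0 (ltac:(lra)).
  have := He1 r r0 re1; rewrite !ger0_norm //; lra.
- move=> [C [sigma hs hn]]; exists (4 * `|C|); exists sigma => //.
  have [e1 e1p He1] := nearR_elim _ hn.
  have [mono nonneg [s0 s1] _ dec] := hs.
  apply: (nearR_intro _ (Num.min (e1 / 2) (Num.min (eps0 / 4) (1 / 2)))).
    by rewrite !lt_min !divr_gt0.
  move=> r r0; rewrite !lt_min => /andP [re1 /andP [re2 re3]].
  have [d0 dd1 d1d] := P r r0 (ltac:(lra)).
  have [d0' _ _] := P (2 * r) (ltac:(lra)) (ltac:(lra)).
  have := He1 (2 * r) (ltac:(lra)) (ltac:(lra)).
  rewrite ger0_norm // => Hd.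
  have s2 : 0 <= sigma (2 * r) by apply: nonneg; lra.
  have sr : 0 <= sigma r by apply: nonneg; lra.
  have C0 : 0 <= `|C| := normr_ge0 C.
  have CC : C * sigma (2 * r) <= `|C| * sigma (2 * r) by apply: ler_wpM2r => //; exact: ler_norm.
  have ds : sigma (2 * r) <= 2 * sigma r.
    have := dec r (2 * r) r0 (ltac:(lra)) (ltac:(lra)).
    rewrite ler_pdivrMr; last lra.
    have -> : sigma r / r * (2 * r) = 2 * sigma r by field; rewrite gt_eqF.
    by [].
  have CC2 : `|C| * sigma (2 * r) <= `|C| * (2 * sigma r) by apply: ler_wpM2l.
  rewrite ger0_norm; last lra.
  have -> : 4 * `|C| * sigma r = 2 * (`|C| * (2 * sigma r)) by ring.
  lra.
Qed.
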